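(* Let $G\subseteq\mathrm{GL}_n(\mathbb{R})$ be a finite group and $H$ a normal subgroup of $G$. Assume: (1) there are $g_1,\dots,g_k\in\mathbb{R}[\underline{X}]^G$ such that a ring homomorphism $\varphi_G:\mathbb{R}[\underline{X}]^G\to\mathbb{R}$ extends to a ring homomorphism $\mathbb{R}[\underline{X}]^H\to\mathbb{R}$ if and only if $\varphi_G(g_1)\ge0,\dots,\varphi_G(g_k)\ge0$; (2) there is $h\in\mathbb{R}[\underline{X}]^H$ such that a ring homomorphism $\varphi_H:\mathbb{R}[\underline{X}]^H\to\mathbb{R}$ extends to a ring homomorphism $\mathbb{R}[\underline{X}]\to\mathbb{R}$ if and only if $\varphi_H(h)\ge0$. Then a ring homomorphism $\varphi_G:\mathbb{R}[\underline{X}]^G\to\mathbb{R}$ extends to a ring homomorphism $\varphi:\mathbb{R}[\underline{X}]\to\mathbb{R}$ if and only if $\varphi_G(\mathcal{R}_G(h))\ge0$, $\varphi_G(g_1)\ge0,\dots,\varphi_G(g_k)\ge0$.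
   Context: $\mathbb{R}[\underline{X}]=\mathbb{R}[X_1,\dots,X_n]$ with $G$ acting by $h^\sigma(x)=h(\sigma^{-1}x)$; $\mathbb{R}[\underline{X}]^K$ is the ring of $K$-invariant polynomials; $\mathcal{R}_G(h)=\frac{1}{|G|}\sum_{\sigma\in G}h^\sigma$ is the Reynolds operator. *)

(* Defs.v *)
From Stdlib Require Import Reals.
From HB Require Import structures.
From mathcomp Require Import all_boot all_order all_algebra all_fingroup.
From mathcomp Require Import mxrepresentation.
From mathcomp Require Import multinomials.mpoly.
From mathcomp Require Import Rstruct.

Set Implicit Arguments.
Unset Strict Implicit.
Unset Printing Implicit Defensive.

Import GRing.Theory Num.Theory.
Local Open Scope ring_scope.

Notation RX n := {mpoly R[n]}.

(* Linear change of variables by a matrix A : (A . h)(x) = h(A x),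
   i.e. X_i |-> sum_j A i j X_j. *)
Definition mx_subst (n : nat) (A : 'M[R]_n) (h : RX n) : RX n :=
  h \mPo [tuple \sum_(j < n) A i j *: 'X_j | i < n].

(* The action h^sigma(x) = h(sigma^{-1} x) of an element sigma of the group
   (acting through the representation rG) on polynomials. *)
Definition poly_act (gT : finGroupType) (G : {group gT}) (n : nat)
  (rG : mx_representation R G n) (sigma : gT) (h : RX n) : RX n :=
  mx_subst (rG (sigma^-1)%g) h.

Definition poly_invariant (gT : finGroupType) (G : {group gT}) (n : nat)
  (rG : mx_representation R G n) (K : {set gT}) (h : RX n) : Prop :=
  forall sigma, sigma \in K -> poly_act rG sigma h = h.

Definition reynolds (gT : finGroupType) (G : {group gT}) (n : nat)
  (rG : mx_representation R G n) (h : RX n) : RX n :=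
  (#|G|%:R)^-1 *: \sum_(sigma in G) poly_act rG sigma h.

(* phi is a ring homomorphism from the subring S (given as a predicate) of
   R[X] to R: only the values of phi on S are relevant. *)
Definition ring_hom_on (n : nat) (S : RX n -> Prop) (phi : RX n -> R) : Prop :=
  [/\ phi 1 = 1,
      forall p q, S p -> S q -> phi (p + q) = phi p + phi q &
      forall p q, S p -> S q -> phi (p * q) = phi p * phi q].

Definition extends_on (n : nat) (S : RX n -> Prop) (phi psi : RX n -> R) : Prop :=
  forall p, S p -> psi p = phi p.

(* Main.v *)
Require Import Defs.
From Stdlib Require Import Reals Classical.
From HB Require Import structures.
From mathcomp Require Import all_boot all_order all_algebra all_fingroup.
From mathcomp Require Import mxrepresentation.
From mathcomp Require Import multinomials.mpoly.
From mathcomp Require Import Rstruct.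

Set Implicit Arguments.
Unset Strict Implicit.
Unset Printing Implicit Defensive.
Import Order.TTheory GRing.Theory Num.Theory.
Local Open Scope ring_scope.

Lemma comp_mpolyA n (p : RX n) (l1 l2 : n.-tuple (RX n)) :
  (p \mPo l1) \mPo l2 = p \mPo [tuple (tnth l1 i) \mPo l2 | i < n].
Proof.
rewrite [p \mPo l1]comp_mpolyEX [RHS]comp_mpolyEX raddf_sum /=; apply: eq_bigr => m _.
rewrite comp_mpolyZ !comp_mpolyX rmorph_prod; congr (_ *: _); apply: eq_bigr => i _.
by rewrite rmorphXn tnth_map tnth_ord_tuple.
Qed.

Lemma mx_substM n (A B : 'M[R]_n) h :
  mx_subst A (mx_subst B h) = mx_subst (B *m A) h.
Proof.
rewrite /mx_subst comp_mpolyA; congr (h \mPo _); apply: eq_from_tnth => i.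
rewrite !tnth_map !tnth_ord_tuple raddf_sum /=.
under eq_bigr => j _ do rewrite comp_mpolyZ comp_mpolyXU -tnth_nth tnth_map tnth_ord_tuple scaler_sumr.
rewrite exchange_big /=; apply: eq_bigr => l _.
by rewrite mxE scaler_suml; apply: eq_bigr => j _; rewrite scalerA.
Qed.
Section S.
Variables (gT : finGroupType) (G : {group gT}) (n : nat) (rG : mx_representation R G n).

Lemma actM a b h : a \in G -> b \in G ->
  poly_act rG a (poly_act rG b h) = poly_act rG (a * b)%g h.
Proof.
move=> aG bG; by rewrite /poly_act mx_substM -repr_mxM ?groupV // invMg.
Qed.

Lemma actD s p q : poly_act rG s (p + q) = poly_act rG s p + poly_act rG s q.
Proof. exact: raddfD. Qed.
Lemma actMul s p q : poly_act rG s (p * q) = poly_act rG s p * poly_act rG s q.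
Proof. exact: rmorphM. Qed.
Lemma act1 s : poly_act rG s 1 = 1.
Proof. exact: comp_mpoly1. Qed.
Lemma actC s c : poly_act rG s c%:MP = c%:MP.
Proof. exact: comp_mpolyC. Qed.
Lemma actZ s c p : poly_act rG s (c *: p) = c *: poly_act rG s p.
Proof. exact: comp_mpolyZ. Qed.
Lemma act_sum s (I : finType) (P : pred I) F :
  poly_act rG s (\sum_(i | P i) F i) = \sum_(i | P i) poly_act rG s (F i).
Proof. exact: raddf_sum. Qed.

Lemma inv_add K p q : poly_invariant rG K p -> poly_invariant rG K q ->
  poly_invariant rG K (p + q).
Proof. by move=> Hp Hq s sK; rewrite actD Hp ?Hq. Qed.
Lemma inv_mul K p q : poly_invariant rG K p -> poly_invariant rG K q ->
  poly_invariant rG K (p * q).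
Proof. by move=> Hp Hq s sK; rewrite actMul Hp ?Hq. Qed.
Lemma inv_C K c : poly_invariant rG K c%:MP.
Proof. by move=> s _; rewrite actC. Qed.
Lemma inv_0 K : poly_invariant rG K 0.
Proof. by move=> s _; rewrite /poly_act /mx_subst comp_mpoly0. Qed.

Lemma reynolds_inv h : poly_invariant rG G (reynolds rG h).
Proof.
move=> t tG; rewrite /reynolds actZ act_sum; congr (_ *: _).
under eq_bigr => s sG do rewrite actM //.
rewrite [RHS](reindex_inj (mulgI t)) /=.
apply: eq_big => s; first by rewrite groupMl.
by [].
Qed.

Lemma act_inv_normal (H : {group gT}) s p : (H <| G)%g -> s \in G ->
  poly_invariant rG H p -> poly_invariant rG H (poly_act rG s p).
Proof.
move=> /andP[sHG nHG] sG Hp t tH.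
have tG : t \in G by apply: (subsetP sHG).
have tsN : (t ^ s)%g \in H by rewrite memJ_norm // (subsetP nHG).
have e : (t * s = s * t ^ s)%g by rewrite /conjg !mulgA mulgV mul1g.
rewrite actM // e -actM ?groupJ // Hp //.
Qed.
End S.

Lemma hom0 n (S : RX n -> Prop) phi : ring_hom_on S phi -> S 0 -> phi 0 = 0.
Proof.
case=> _ hD _ S0; have := hD 0 0 S0 S0; rewrite addr0 => e.
by apply: (addrI (phi 0)); rewrite addr0 -e.
Qed.

Lemma hom_sum n (S : RX n -> Prop) phi (I : finType) (P : pred I) F :
  ring_hom_on S phi -> S 0 -> (forall p q, S p -> S q -> S (p + q)) ->
  (forall i, P i -> S (F i)) ->
  S (\sum_(i | P i) F i) /\ phi (\sum_(i | P i) F i) = \sum_(i | P i) phi (F i).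
Proof.
move=> hom S0 SD SF.
elim/big_rec2: _ => [|i x y Pi [Sx <-]].
  by split; [exact: S0 | exact: (hom0 hom S0)].
have SFi := SF i Pi.
split; first exact: (SD _ _ SFi Sx).
by case: hom => _ hD _; apply: hD.
Qed.

Lemma hom_nat n (S : RX n -> Prop) phi m :
  ring_hom_on S phi -> S 0 -> S 1 -> (forall p q, S p -> S q -> S (p + q)) ->
  S (m%:R) /\ phi m%:R = m%:R.
Proof.
move=> hom S0 S1 SD; elim: m => [|m [Sm Pm]].
  by split; [exact: S0 | exact: (hom0 hom S0)].
rewrite mulrS; split; first exact: SD.
by case: hom => h1 hD _; rewrite hD // h1 Pm -mulrS.
Qed.

Lemma hom_invN n (S : RX n -> Prop) phi (N : nat) :
  ring_hom_on S phi -> S 0 -> S 1 -> (forall p q, S p -> S q -> S (p + q)) ->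
  (forall c, S c%:MP) -> (N%:R : R) != 0 ->
  phi ((N%:R : R)^-1)%:MP = (N%:R : R)^-1.
Proof.
move=> hom S0 S1 SD SC N0.
have [SN PN] := hom_nat N hom S0 S1 SD.
have e : ((N%:R : R)^-1)%:MP * N%:R = 1 :> RX n.
  by rewrite -mpolyC_nat -mpolyCM mulVf // mpolyC1.
have := hom; case=> h1 _ hM.
have := hM _ _ (SC ((N%:R : R)^-1)) SN; rewrite e h1 PN => /esym e2.
by apply: (mulIf N0); rewrite e2 mulVf.
Qed.

Lemma inv_1 (gT : finGroupType) (G : {group gT}) n (rG : mx_representation R G n) K :
  poly_invariant rG K 1.
Proof. by move=> s _; rewrite act1. Qed.

Lemma reyE (gT : finGroupType) (G : {group gT}) n (rG : mx_representation R G n)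
  (S : RX n -> Prop) psi h :
  ring_hom_on S psi -> S 0 -> S 1 -> (forall p q, S p -> S q -> S (p + q)) ->
  (forall p q, S p -> S q -> S (p * q)) -> (forall c, S c%:MP) ->
  (forall s, s \in G -> S (poly_act rG s h)) ->
  psi (reynolds rG h) = (#|G|%:R)^-1 * \sum_(s in G) psi (poly_act rG s h).
Proof.
move=> hom S0 S1 SD SM SC Sh.
have N0 : (#|G|%:R : R) != 0 by rewrite pnatr_eq0 -lt0n cardG_gt0.
have [Ssum Psum] := hom_sum (P := mem G) (F := fun s => poly_act rG s h) hom S0 SD Sh.
rewrite /reynolds -mul_mpolyC.
have := hom; case=> _ _ hM.
by rewrite hM // Psum (hom_invN hom).
Qed.

Theorem lemma3p15 (gT : finGroupType) (G H : {group gT}) (n : nat)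
  (rG : mx_representation R G n) (rG_faithful : mx_faithful rG)
  (HnG : (H <| G)%g) (k : nat) (g : 'I_k -> RX n) (h : RX n)
  (g_inv : forall i, poly_invariant rG G (g i))
  (hyp1 : forall phiG, ring_hom_on (poly_invariant rG G) phiG ->
     (exists phiH, ring_hom_on (poly_invariant rG H) phiH /\
                   extends_on (poly_invariant rG G) phiG phiH)
     <-> (forall i, 0 <= phiG (g i)))
  (h_inv : poly_invariant rG H h)
  (hyp2 : forall phiH, ring_hom_on (poly_invariant rG H) phiH ->
     (exists phi, ring_hom_on (fun _ => True) phi /\
                  extends_on (poly_invariant rG H) phiH phi)
     <-> 0 <= phiH h) :
  forall phiG, ring_hom_on (poly_invariant rG G) phiG ->
    (exists phi, ring_hom_on (fun _ => True) phi /\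
                 extends_on (poly_invariant rG G) phiG phi)
    <-> (0 <= phiG (reynolds rG h) /\ forall i, 0 <= phiG (g i)).
Proof.
move=> phiG homG.
have sHG : (H \subset G)%g := normal_sub HnG.
have invG_H p : poly_invariant rG G p -> poly_invariant rG H p.
  by move=> Hp s sH; apply: Hp; apply: (subsetP sHG).
have weak (S : RX n -> Prop) phi : ring_hom_on (fun _ => True) phi -> ring_hom_on S phi.
  by case=> h1 hD hM; split=> // p q _ _; [apply: hD | apply: hM].
have N0 : (0 < (#|G|%:R : R))%R by rewrite ltr0n cardG_gt0.
split.
- move=> [phi [homphi ext]]; split; last first.
    by apply: (hyp1 phiG homG).1; exists phi; split=> //; apply: weak.
  rewrite -ext; last exact: reynolds_inv.
  rewrite (reyE (S := fun _ => True) (h := h) homphi) //.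
  apply: mulr_ge0; first by rewrite invr_ge0 ltW.
  apply: sumr_ge0 => s sG.
  pose psi := fun p => phi (poly_act rG s p).
  have hompsi : ring_hom_on (fun _ => True) psi.
    case: homphi => h1 hD hM; split=> [|p q _ _|p q _ _].
    - by rewrite /psi act1.
    - by rewrite /psi actD hD.
    - by rewrite /psi actMul hM.
  apply: (hyp2 psi (weak _ _ hompsi)).1.
  by exists psi; split.
- move=> [Rh gi].
  have [phiH [homH extH]] := (hyp1 phiG homG).2 gi.
  have SH0 : poly_invariant rG H 0 by apply: inv_0.
  have SH1 : poly_invariant rG H 1 by apply: inv_1.
  have SHD p q : poly_invariant rG H p -> poly_invariant rG H q -> poly_invariant rG H (p + q).
    exact: inv_add.
  have SHM p q : poly_invariant rG H p -> poly_invariant rG H q -> poly_invariant rG H (p * q).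
    exact: inv_mul.
  have SHC c : poly_invariant rG H c%:MP by apply: inv_C.
  have Shs s : s \in G -> poly_invariant rG H (poly_act rG s h).
    by move=> sG; apply: act_inv_normal.
  rewrite -extH in Rh; last exact: reynolds_inv.
  rewrite (reyE (h := h) homH) // in Rh.
  rewrite pmulr_rge0 ?invr_gt0 // in Rh.
  have [s [sG Hs]] : exists s, s \in G /\ 0 <= phiH (poly_act rG s h).
    apply: NNPP => nE.
    have neg s : s \in G -> phiH (poly_act rG s h) < 0.
      move=> sG; rewrite ltNge; apply/negP => le; apply: nE; exists s; split=> //.
    move: Rh; rewrite (bigD1 1%g) //=.
    have a := neg 1%g (group1 G).
    have b : \sum_(i in G | i != 1%g) phiH (poly_act rG i h) <= 0.
      by apply: sumr_le0 => i /andP[iG _]; apply: ltW; apply: neg.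
    move=> c; have : (0 < 0 :> R)%R; last by rewrite ltxx.
    apply: (le_lt_trans c); have := ltr_leD a b; by rewrite addr0.
  pose psi := fun p => phiH (poly_act rG s p).
  have hompsi : ring_hom_on (poly_invariant rG H) psi.
    case: homH => h1 hD hM; split=> [|p q Hp Hq|p q Hp Hq].
    - by rewrite /psi act1.
    - by rewrite /psi actD hD //; apply: act_inv_normal.
    - by rewrite /psi actMul hM //; apply: act_inv_normal.
  have [phi [homphi extphi]] := (hyp2 psi hompsi).2 Hs.
  exists phi; split=> // p Gp.
  rewrite extphi; last exact: invG_H.
  by rewrite /psi Gp // extH.
Qed.
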